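(* Let $m,\Delta$ be positive integers, $X\subseteq\{-\Delta,\dots,\Delta\}^m$ and $x\in X$ such that $-x\in\mathrm{cone}(X\setminus\{x\})$. Then there is $\lambda\in\mathbb{Z}_{\ge0}^X$ with $\lambda_x>0$, at most $m+1$ non-zero components, $\|\lambda\|_\infty\le\Delta^m m^{m/2}$, and \[ -\lambda_x x=\sum_{y\in X\setminus\{x\}}\lambda_y y. \]
   Context: $\mathrm{cone}(Y)=\{\sum_{y\in Y}\lambda_y y:\lambda_y\ge0\}$. *)

(* Defs.v *)
From HB Require Import structures.
From mathcomp Require Import all_boot all_order all_algebra.
From mathcomp Require Import finmap.
Set Implicit Arguments. Unset Strict Implicit. Unset Printing Implicit Defensive.
Import Order.TTheory GRing.Theory Num.Theory.
Local Open Scope ring_scope.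
Local Open Scope fset_scope.

Definition in_cone (R : rcfType) (m : nat) (Y : {fset 'rV[int]_m}) (v : 'rV[R]_m) : Prop :=
  exists mu : 'rV[int]_m -> R,
    (forall y, y \in Y -> 0 <= mu y) /\
    v = \sum_(y <- Y) mu y *: map_mx (fun z : int => z%:~R) y.

(* Main.v *)
Require Import Defs.
From HB Require Import structures.
From mathcomp Require Import all_boot all_order all_algebra.
From mathcomp Require Import finmap.
Import Order.TTheory GRing.Theory Num.Theory.
Local Open Scope ring_scope.
Local Open Scope fset_scope.
Set Implicit Arguments. Unset Strict Implicit. Unset Printing Implicit Defensive.
Local Close Scope fset_scope.

Section Gram.
Variable R : realFieldType.

Lemma sqn_sum p (r : 'M[R]_(1,p)) : (r *m r^T) 0 0 = \sum_j r 0 j ^+ 2.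
Proof. by rewrite mxE; apply: eq_bigr => j _; rewrite mxE expr2. Qed.

Lemma sqn_ge0 p (r : 'M[R]_(1,p)) : 0 <= (r *m r^T) 0 0.
Proof. by rewrite sqn_sum; apply: sumr_ge0 => j _; rewrite sqr_ge0. Qed.

Lemma sqn_eq0 p (r : 'M[R]_(1,p)) : r *m r^T = 0 -> r = 0.
Proof.
move=> /matrixP /(_ 0 0); rewrite sqn_sum mxE => H.
apply/matrixP => i j; rewrite (ord1 i) mxE.
have := psumr_eq0P (P := predT) (fun j _ => sqr_ge0 _) H.
by move=> /(_ j erefl) /eqP; rewrite sqrf_eq0 => /eqP.
Qed.

Lemma gram_step n p (a : 'rV[R]_p) (A1 : 'M[R]_(n,p)) P1 :
  0 <= \det (A1 *m A1^T) -> \det (A1 *m A1^T) <= P1 ->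
  0 <= \det (col_mx a A1 *m (col_mx a A1)^T) /\
  \det (col_mx a A1 *m (col_mx a A1)^T) <= (a *m a^T) 0 0 * P1.
Proof.
move=> G0 GP.
have P0 : 0 <= P1 by apply: le_trans GP.
set G1 := A1 *m A1^T.
have [uG|nuG] := boolP (G1 \in unitmx).
  pose c := a *m A1^T *m invmx G1.
  pose b := a - c *m A1.
  have bA1 : b *m A1^T = 0.
    by rewrite /b mulmxBl -(mulmxA c) (mulmxKV uG) subrr.
  have A1b : A1 *m b^T = 0.
    by rewrite -[A1]trmxK -trmx_mul bA1 trmx0.
  have eA : col_mx a A1 = block_mx 1%:M c 0 1%:M *m col_mx b A1.
    by rewrite mul_block_col !mul1mx mul0mx add0r /b subrK.
  have eD : \det (col_mx a A1 *m (col_mx a A1)^T) = (b *m b^T) 0 0 * \det G1.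
    rewrite eA trmx_mul !mulmxA det_mulmx det_tr -mulmxA det_mulmx det_ublock !det1 !mul1r mulr1.
    rewrite tr_col_mx mul_col_row bA1 A1b det_ublock det_mx11 //.
  have ea : (a *m a^T) 0 0 = (b *m b^T) 0 0 + ((c *m A1) *m (c *m A1)^T) 0 0.
    have -> : a = b + c *m A1 by rewrite /b subrK.
    have e1 : b *m (c *m A1)^T = 0 by rewrite trmx_mul mulmxA bA1 mul0mx.
    have e2 : c *m A1 *m b^T = 0 by rewrite -mulmxA A1b mulmx0.
    by rewrite raddfD /= mulmxDl !mulmxDr e1 e2 addr0 add0r mxE.
  rewrite eD; split; first by rewrite mulr_ge0 // sqn_ge0.
  apply: ler_pM => //; first exact: sqn_ge0.
  by rewrite ea lerDl sqn_ge0.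
have [i Hi] : exists i, row i (kermx G1) != 0.
  case: (pickP (fun i => row i (kermx G1) != 0)) => [i Hi | H0]; first by exists i.
  exfalso; move: nuG; rewrite -row_free_unit -kermx_eq0 => /negP; apply.
  apply/eqP/row_matrixP => i; rewrite row0; exact/eqP/negbFE/H0.
set u := row i (kermx G1) in Hi.
have uG : u *m G1 = 0 by rewrite /u -row_mul mulmx_ker row0.
have uA : u *m A1 = 0.
  apply: sqn_eq0; rewrite trmx_mul mulmxA -(mulmxA u) -/G1 uG mul0mx //.
set z := row_mx (0 : 'rV[R]_1) u.
have zA : z *m col_mx a A1 = 0 by rewrite mul_row_col mul0mx uA addr0.
have nz : z != 0.
  apply: contraNneq Hi => zz; have := zz; rewrite -(row_mx0 _ 1 1 n) => /eq_row_mx [_ ->] //.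
have D0 : \det (col_mx a A1 *m (col_mx a A1)^T) = 0.
  apply/eqP; apply: contraNT nz => dn.
  have uu : col_mx a A1 *m (col_mx a A1)^T \in unitmx by rewrite unitmxE unitfE.
  apply/eqP; apply: (row_free_inj (A := col_mx a A1 *m (col_mx a A1)^T)).
    by rewrite row_free_unit.
  by rewrite mulmxA zA !mul0mx.
by rewrite D0; split => //; rewrite mulr_ge0 // sqn_ge0.
Qed.

Lemma gram n p (A : 'M[R]_(n,p)) :
  0 <= \det (A *m A^T) /\ \det (A *m A^T) <= \prod_(i < n) \sum_(j < p) A i j ^+ 2.
Proof.
elim: n A => [|n IH] A.
  by rewrite det_mx00 big_ord0.
have := vsubmxK (A : 'M_(1 + n, p)).
move: (usubmx (A : 'M_(1 + n, p))) (dsubmx (A : 'M_(1 + n, p))) => a A1 eA.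
have [I0 I1] := IH A1.
have [H0 H1] := gram_step a I0 I1.
have -> : A = col_mx a A1 by rewrite eA.
split => //; apply: (le_trans H1).
rewrite big_ord_recl sqn_sum.
have -> : (ord0 : 'I_n.+1) = lshift n (0 : 'I_1) by apply: val_inj.
rewrite le_eqVlt; apply/orP; left; apply/eqP; congr (_ * _).
  by apply: eq_bigr => j _; rewrite -(col_mxEu a A1 0 j).
apply: eq_bigr => i _; apply: eq_bigr => j _.
have -> : lift (lshift n (0 : 'I_1)) i = rshift 1 i by apply: val_inj.
by rewrite -(col_mxEd a A1 i j).
Qed.
End Gram.

Lemma hadamard_int (R : rcfType) m Delta k (C : 'M[int]_k) :
  (0 < m)%N -> (0 < Delta)%N -> (k <= m)%N ->
  (forall i j, `|C i j| <= Delta%:Z) ->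
  ((`|\det C|%N)%:R : R) <= (Delta%:R : R) ^+ m * Num.sqrt (m%:R : R) ^+ m.
Proof.
move=> m0 D0 km HC.
set CR := map_mx (fun z : int => z%:~R : R) C.
have dC : \det CR = (\det C)%:~R by rewrite det_map_mx.
have h1 : \det CR ^+ 2 <= (Delta%:R ^+ 2 *+ k) ^+ k.
  have [_ H] := gram CR.
  rewrite expr2 -{2}det_tr -det_mulmx; apply: le_trans H _.
  rewrite -[X in _ ^+ X](card_ord k) -prodr_const.
  apply: ler_prod => i _; rewrite sumr_ge0 => [|j _]; last exact: sqr_ge0.
  rewrite /= -[X in _ *+ X](card_ord k) -sumr_const.
  apply: ler_sum => j _; rewrite mxE -real_normK ?num_real //.
  rewrite ler_pXn2r // ?nnegrE ?normr_ge0 ?ler0n //.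
  by rewrite -intr_norm -[Delta%:R]/((Delta%:Z)%:~R) ler_int.
have h2 : (Delta%:R ^+ 2 *+ k) ^+ k <= (Delta%:R ^+ 2 *+ m : R) ^+ m.
  have g1 : 1 <= (Delta%:R ^+ 2 *+ m : R).
    by rewrite -natrX -mulr_natr -natrM ler1n muln_gt0 expn_gt0 D0 m0.
  apply: (@le_trans _ _ ((Delta%:R ^+ 2 *+ m : R) ^+ k)).
    apply: lerXn2r; rewrite ?nnegrE ?mulrn_wge0 ?sqr_ge0 //.
    by rewrite ler_wpMn2l // sqr_ge0.
  exact: (ler_weXn2l g1 km).
rewrite natr_absz intr_norm -dC.
rewrite -(@ler_pXn2r _ 2) // ?nnegrE ?normr_ge0 ?mulr_ge0 ?exprn_ge0 ?sqrtr_ge0 ?ler0n //.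
rewrite real_normK ?num_real //; apply: (le_trans h1); apply: (le_trans h2).
rewrite exprMn -!exprM mulnC !exprM sqr_sqrtr ?ler0n // -exprMn mulr_natr //.
Qed.

Section Carath.
Variable R : realFieldType.

Lemma drop_step p k (M : 'M[R]_(k.+1, p)) (mu : 'rV[R]_k.+1) i0 :
  mu 0 i0 = 0 -> colsub (lift i0) mu *m rowsub (lift i0) M = mu *m M.
Proof.
move=> z0; apply/rowP => c; rewrite !mxE (bigD1_ord i0) //= z0 mul0r add0r.
by apply: eq_bigr => j _; rewrite !mxE.
Qed.

Lemma reduce p k (M : 'M[R]_(k,p)) (mu : 'rV[R]_k) :
  (forall i, 0 < mu 0 i) -> ~~ row_free M ->
  exists mu2 : 'rV[R]_k,
    [/\ forall i, 0 <= mu2 0 i, mu2 *m M = mu *m M & exists i0, mu2 0 i0 = 0].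
Proof.
move=> mu0 nf.
have [nu [nuM [j0 nj0]]] : exists nu : 'rV_k, nu *m M = 0 /\ exists j, 0 < nu 0 j.
  have [i Hi] : exists i, row i (kermx M) != 0.
    case: (pickP (fun i => row i (kermx M) != 0)) => [i Hi | H0]; first by exists i.
    exfalso; move: nf; rewrite -kermx_eq0 => /negP; apply.
    apply/eqP/row_matrixP => i; rewrite row0; exact/eqP/negbFE/H0.
  set u := row i (kermx M) in Hi.
  have uM : u *m M = 0 by rewrite /u -row_mul mulmx_ker row0.
  have [j uj] : exists j, u 0 j != 0.
    case: (pickP (fun j => u 0 j != 0)) => [j H|H]; first by exists j.
    case/eqP: Hi; apply/rowP => j; have := H j; rewrite /= => /negbFE /eqP ->; by rewrite mxE.
  have [ujn|ujp|ue] := ltgtP (u 0 j) 0.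
  - exists (- u); split; first by rewrite mulNmx uM oppr0.
    by exists j; rewrite mxE oppr_gt0.
  - by exists u; split => //; exists j.
  - by rewrite ue eqxx in uj.
case: (@arg_minP _ _ _ j0 (fun i => 0 < nu 0 i) (fun i => mu 0 i / nu 0 i) nj0).
move=> i1 Pi1 Hmin.
set t := mu 0 i1 / nu 0 i1.
have t0 : 0 <= t by rewrite /t divr_ge0 // ltW.
exists (mu - t *: nu); split.
- move=> i; rewrite !mxE subr_ge0.
  have [h|h] := ltP 0 (nu 0 i).
    by rewrite -ler_pdivlMr //; exact: Hmin.
  apply: le_trans (ltW (mu0 i)).
  exact: mulr_ge0_le0.
- by rewrite mulmxBl -scalemxAl nuM scaler0 subr0.
- by exists i1; rewrite !mxE /t divfK ?subrr // gt_eqF.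
Qed.

Lemma carath p k (M : 'M[R]_(k,p)) (mu : 'rV[R]_k) :
  (forall i, 0 <= mu 0 i) ->
  exists k', exists f : 'I_k' -> 'I_k, exists mu' : 'rV[R]_k',
   [/\ injective f, (forall i, 0 < mu' 0 i), mu' *m rowsub f M = mu *m M
     & row_free (rowsub f M)].
Proof.
have rid : forall k (M : 'M[R]_(k,p)), rowsub id M = M.
  by move=> k0 M0; apply/matrixP => i j; rewrite mxE.
elim: k M mu => [|k IH] M mu mu0.
  exists 0%N, id, mu; split => //; first by case.
    by rewrite rid.
  by rewrite -row_leq_rank.
have drop : forall mu2 : 'rV_k.+1, (forall i, 0 <= mu2 0 i) -> mu2 *m M = mu *m M ->
    (exists i0, mu2 0 i0 = 0) ->
  exists k', exists f : 'I_k' -> 'I_k.+1, exists mu' : 'rV[R]_k',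
   [/\ injective f, (forall i, 0 < mu' 0 i), mu' *m rowsub f M = mu *m M
     & row_free (rowsub f M)].
  move=> mu2 m20 e2 [i0 z0].
  have [k' [f [mu' [fi mp e' rf]]]] :=
    IH (rowsub (lift i0) M) (colsub (lift i0) mu2) (fun i => ltac:(by rewrite mxE m20)).
  exists k', (lift i0 \o f), mu'; split => //.
  - exact: inj_comp (@lift_inj _ i0) fi.
  - by rewrite rowsub_comp e' drop_step.
  - by rewrite rowsub_comp.
case: (pickP (fun i => mu 0 i == 0)) => [i0 /eqP z0 | nz].
  by apply: (drop mu) => //; exists i0.
have mup : forall i, 0 < mu 0 i by move=> i; rewrite lt_def nz mu0.
case rfM: (row_free M).
  by exists k.+1, id, mu; split => //; rewrite rid.
have [mu2 [m20 e2 ex]] := reduce mup (negbT rfM).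
exact: drop mu2 m20 e2 ex.
Qed.
End Carath.

Lemma cramer_entry k (A : 'M[int]_k) (v : 'rV[int]_k) i :
  (v *m \adj A) 0 i = \det (\matrix_(r, c) if r == i then v 0 c else A r c).
Proof.
rewrite (expand_det_row _ i) mxE; apply: eq_bigr => j _; rewrite !mxE eqxx.
congr (_ * _); rewrite /cofactor; congr (_ * \det _).
by apply/matrixP => r c; rewrite !mxE eq_sym (negbTE (neq_lift _ _)).
Qed.

Unset Implicit Arguments. Set Strict Implicit.
Local Open Scope fset_scope.

Theorem lemma11 (R : rcfType) (m Delta : nat) (X : {fset 'rV[int]_m}) (x : 'rV[int]_m) :
  (0 < m)%N -> (0 < Delta)%N ->
  (forall y, y \in X -> forall i, `|y 0 i| <= Delta%:Z) ->
  x \in X ->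
  in_cone (X `\ x) (- map_mx (fun z : int => z%:~R : R) x) ->
  exists lam : 'rV[int]_m -> nat,
    [/\ (0 < lam x)%N,
        (#|` [fset y in X | lam y != 0%N]| <= m.+1)%N,
        (forall y, y \in X -> (lam y)%:R <= (Delta%:R : R) ^+ m * Num.sqrt (m%:R : R) ^+ m)
      & - ((lam x)%:Z *: x) = \sum_(y <- X `\ x) (lam y)%:Z *: y].
Proof.
move=> m0 D0 HX xX [mu [mu0 Hmu]].
set Y := X `\ x.
set s : seq _ := (Y : seq _).
pose Ni : 'M[int]_(size s, m) := \matrix_(i, j) (nth 0 s i) 0 j.
pose N := map_mx (fun z : int => z%:~R : R) Ni.
pose mu1 : 'rV[R]_(size s) := \row_i mu (nth 0 s i).
have sY : forall i : 'I_(size s), nth 0 s i \in Y by move=> i; rewrite mem_nth.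
have sX : forall i : 'I_(size s), nth 0 s i \in X.
  by move=> i; have := sY i; rewrite in_fsetD1 => /andP [].
have mu1p : forall i, 0 <= mu1 0 i by move=> i; rewrite mxE mu0.
have emu : mu1 *m N = - map_mx (fun z : int => z%:~R : R) x.
  rewrite Hmu (big_nth 0) big_mkord; apply/rowP => c; rewrite !mxE summxE.
  by apply: eq_bigr => i _; rewrite !mxE.
have [k [f [mu' [finj mup emu' rf]]]] := carath N mu1p.
rewrite emu in emu'.
pose Mi := rowsub f Ni.
have eMR : rowsub f N = map_mx (fun z : int => z%:~R : R) Mi.
  by apply/matrixP => i j; rewrite !mxE.
have km : (k <= m)%N by rewrite -(eqP rf) rank_leq_col.
have rfull : row_full (rowsub f N)^T by rewrite /row_full mxrank_tr.
set g := fullrankfun rfull.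
have Bu := fullrowsub_unit rfull.
pose Bi := colsub g Mi.
have eB : (rowsub g (rowsub f N)^T)^T = map_mx (fun z : int => z%:~R : R) Bi.
  by apply/matrixP => i j; rewrite !mxE.
have BRu : map_mx (fun z : int => z%:~R : R) Bi \in unitmx by rewrite -eB unitmx_tr.
have d0 : \det Bi != 0.
  by move: BRu; rewrite unitmxE unitfE det_map_mx intr_eq0.
pose v : 'rV[int]_k := colsub g (- x).
have ev : mu' *m map_mx (fun z : int => z%:~R : R) Bi = map_mx (fun z : int => z%:~R : R) v.
  have := congr1 (colsub g) emu'; rewrite -mulmx_colsub => H.
  have e1 : map_mx (fun z : int => z%:~R : R) Bi = colsub g (rowsub f N).
    by apply/matrixP => i j; rewrite !mxE.
  have e2 : map_mx (fun z : int => z%:~R : R) v = colsub g (- map_mx (fun z : int => z%:~R : R) x).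
    by apply/matrixP => i j; rewrite !mxE rmorphN.
  by rewrite e1 e2.
pose d := \det Bi.
pose w := v *m \adj Bi.
have ew : map_mx (fun z : int => z%:~R : R) w = (d%:~R : R) *: mu'.
  by rewrite map_mxM map_mx_adj -ev -mulmxA mul_mx_adj det_map_mx mul_mx_scalar.
have ewi : forall i, ((w 0 i)%:~R : R) = (d%:~R : R) * mu' 0 i.
  by move=> i; have := congr1 (fun M : 'M[R]_(1,k) => M 0 i) ew; rewrite !mxE.
pose e : int := if 0 < d then 1 else -1.
have ed : (`|d|%N)%:Z = e * d.
  rewrite /e; case: ifP => h; first by rewrite mul1r gtz0_abs.
  by rewrite ltz0_abs ?mulN1r // lt_neqAle d0 /= leNgt h.
have ewa : forall i, (absz (w 0 i))%:Z = e * w 0 i.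
  move=> i; have pos : 0 < e * w 0 i.
    rewrite -(ltr0z R) rmorphM /= ewi mulrA -rmorphM /= -ed.
    by rewrite mulr_gt0 // ltr0z ltz_nat absz_gt0.
  rewrite -(gtz0_abs pos) abszM.
  by rewrite /e; case: ifP => _ /=; rewrite mul1n.
have ewM : w *m Mi = - (d *: x).
  have : map_mx (fun z : int => z%:~R : R) (w *m Mi) =
         (d%:~R : R) *: (- map_mx (fun z : int => z%:~R : R) x).
    by rewrite map_mxM ew -scalemxAl -eMR emu'.
  move/rowP => H; apply/rowP => c; apply: (@intr_inj R); move: (H c).
  by rewrite !mxE => ->; rewrite rmorphN rmorphM mulrN.
have sinj : forall i j : 'I_k, nth 0 s (f i) = nth 0 s (f j) -> i = j.
  move=> i j /eqP; rewrite nth_uniq ?fset_uniq // => /eqP /val_inj; exact: finj.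
pose wa := fun i : 'I_k => absz (w 0 i).
pose sf := fun i : 'I_k => nth 0 s (f i).
pose lam := fun y => if y == x then `|d|%N
   else (\sum_(i < k | sf i == y) wa i)%N.
have bound : forall C : 'M[int]_k, (forall i j, `|C i j| <= Delta%:Z) ->
    ((`|\det C|%N)%:R : R) <= (Delta%:R : R) ^+ m * Num.sqrt (m%:R : R) ^+ m.
  by move=> C HC; apply: hadamard_int.
have Bb : forall i j, `|Bi i j| <= Delta%:Z.
  by move=> i j; rewrite !mxE; apply: HX (sX _) _.
exists lam; split.
- by rewrite /lam eqxx absz_gt0.
- have sub : {subset [fset y in X | lam y != 0%N] <= x :: [seq sf i | i <- enum 'I_k]}.
    move=> y; rewrite !inE => /andP [yX ly].
    case: eqP => //= nyx; move: ly; rewrite /lam; move/eqP: nyx => /negbTE ->.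
    case: (pickP (fun i => sf i == y)) => [i /eqP <- _| none].
      by apply/mapP; exists i; rewrite ?mem_enum.
    by rewrite big_pred0.
  have := uniq_leq_size (fset_uniq _) sub.
  rewrite /= size_map size_enum_ord => h; apply: leq_trans h _; by rewrite ltnS.
- move=> y yX; rewrite /lam; case: eqP => [_|nyx].
    by apply: bound.
  case: (pickP (fun i => sf i == y)) => [i0 Hi0 | none]; last first.
    by rewrite big_pred0 // mulr_ge0 ?exprn_ge0 ?sqrtr_ge0 ?ler0n.
  rewrite (bigD1 i0) //= big1 ?addn0; last first.
    move=> j /andP [Hj nj]; exfalso; move/negP: nj; apply; apply/eqP.
    by apply: sinj; move: Hj Hi0; rewrite /sf => /eqP -> /eqP ->.
  rewrite /wa cramer_entry; apply: bound => r c; rewrite mxE; case: eqP => _; last exact: Bb.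
  by rewrite /v !mxE normrN; apply: HX.
- rewrite {1}/lam eqxx ed.
  have -> : \sum_(y <- Y) (lam y)%:Z *: y =
      \sum_(y <- s) \sum_(i < k) (if sf i == y then (wa i)%:Z *: y else 0).
    apply: eq_big_seq => y yY.
    have nyx : y != x by move: yY; rewrite in_fsetD1 => /andP [].
    rewrite /lam (negbTE nyx) big_mkcond /= (big_morph Posz PoszD (erefl _)) scaler_suml.
    by apply: eq_bigr => i _; case: ifP => // _; rewrite scale0r.
  rewrite exchange_big /=.
  have -> : \sum_(i < k) \sum_(y <- s) (if sf i == y then (wa i)%:Z *: y else 0) =
       \sum_(i < k) (e * w 0 i) *: sf i.
    apply: eq_bigr => i _; rewrite -ewa.
    rewrite (bigD1_seq (sf i)) ?fset_uniq ?mem_nth //= eqxx big1 ?addr0 //.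
    by move=> y /negbTE; rewrite eq_sym => ->.
  have -> : \sum_(i < k) (e * w 0 i) *: sf i = e *: (w *m Mi).
    apply/rowP => c; rewrite summxE !mxE mulr_sumr; apply: eq_bigr => i _.
    by rewrite !mxE mulrA.
  by rewrite ewM scalerN scalerA.
Qed.
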